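(* Let $0<A<1$ and define $g:\mathbb{R}\to\mathbb{R}$ by $g(x)=Ax+\log\big(1+A(e^{-x}-1)\big)$ and $f(x)=g(x)/x^2$ for $x\ne0$. Let $B$ be a nonnegative constant with $B>\log\big(\tfrac{A}{1-A}\big)$. Then for all $0<x\le B$, $$g(x)\ge\min\Big\{\lim_{y\to0}f(y),\,f(B)\Big\}\cdot x^2.$$ *)

(* Defs.v *)
From Stdlib Require Import Reals.
From Coquelicot Require Import Coquelicot.
Open Scope R_scope.

Definition gF (A x : R) : R := A * x + ln (1 + A * (exp (- x) - 1)).

(* f(x) = g(x) / x^2  (only meaningful for x <> 0; the limit below is the
   punctured limit, so the junk value at 0 is irrelevant) *)
Definition fF (A x : R) : R := gF A x / x ^ 2.

(* Main.v *)
Require Import Defs.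
From Stdlib Require Import Reals.
From Coquelicot Require Import Coquelicot.
Open Scope R_scope.
From Stdlib Require Import Lra Lia.

Section S.
Variable A : R.
Hypothesis hA0 : 0 < A.
Hypothesis hA1 : A < 1.

Ltac sc := repeat split; try lra; try (repeat apply Rmult_integral_contrapositive_currified; lra).
Let u x := A + (1-A) * exp x.
Lemma u_pos x : 0 < u x.
Proof. unfold u. pose proof (exp_pos x). nra. Qed.

Definition G x := ln (A + (1-A) * exp x) - (1-A) * x.
Definition g1 x := (1-A) * exp x / (A + (1-A) * exp x) - (1-A).
Definition g2 x := A * (1-A) * exp x / (A + (1-A) * exp x)^2.
Definition g3 x := A * (1-A) * exp x * (A - (1-A) * exp x) / (A + (1-A) * exp x)^3.
Definition H x := x * g1 x - 2 * G x.
Definition K x := x * g2 x - g1 x.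
Definition F x := G x / x^2.

Lemma dG x : is_derive G x (g1 x).
Proof. pose proof (u_pos x). unfold u in *. unfold G, g1. auto_derive; sc; field; sc. Qed.
Lemma dg1 x : is_derive g1 x (g2 x).
Proof. pose proof (u_pos x). unfold u in *. unfold g1, g2. auto_derive; sc; field; sc. Qed.
Lemma dg2 x : is_derive g2 x (g3 x).
Proof. pose proof (u_pos x). unfold u in *. unfold g2, g3. auto_derive; sc; field; sc. Qed.
Lemma dH x : is_derive H x (K x).
Proof. pose proof (u_pos x). unfold u in *. unfold H, K, G, g1, g2. auto_derive; sc; field; sc. Qed.
Lemma dK x : is_derive K x (x * g3 x).
Proof. pose proof (u_pos x). unfold u in *. unfold K, g3, g1, g2. auto_derive; sc; field; sc. Qed.
Lemma dF x : x <> 0 -> is_derive F x (H x / x^3).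
Proof. intro hx. pose proof (u_pos x). unfold u in *. unfold F, H, G, g1. auto_derive; sc; field; sc. Qed.

Definition P (phi : R -> R) := forall s t, 0 < s <= t -> phi s <= 0 -> phi t <= 0.

Lemma mvt f f' a b : a < b -> (forall c, is_derive f c (f' c)) ->
  exists c, f b - f a = f' c * (b - a) /\ a < c < b.
Proof. intros hab hd. apply MVT_cor2; auto. intros c _. apply is_derive_Reals, hd. Qed.

Lemma Pprop phi psi : phi 0 = 0 -> (forall x, is_derive phi x (psi x)) -> P psi -> P phi.
Proof.
intros h0 hd hP s t [hs hst] hphi.
destruct (mvt phi psi 0 s hs hd) as [c [hc1 hc2]].
assert (psi c <= 0).
{ destruct (Rle_or_lt (psi c) 0); auto. rewrite h0 in hc1. nra. }
destruct (Rle_lt_or_eq_dec s t hst) as [lt|eq]; [|subst; auto].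
destruct (mvt phi psi s t lt hd) as [d [hd1 hd2]].
assert (psi d <= 0) by (apply (hP c d); [lra|auto]).
nra.
Qed.

Lemma P3 : P (fun x => x * g3 x).
Proof.
intros s t [hs hst] h. unfold g3 in *.
pose proof (u_pos s). pose proof (u_pos t). unfold u in *.
set (us := A + (1 - A) * exp s) in *. set (ut := A + (1 - A) * exp t) in *.
assert (hes : 0 < exp s) by apply exp_pos. assert (het : 0 < exp t) by apply exp_pos.
assert (exp s <= exp t) by (destruct (Req_dec s t); [subst; lra| left; apply exp_increasing; lra]).
assert (hA2 : 0 < A * (1-A)) by nra.
assert (A - (1 - A) * exp s <= 0).
{ destruct (Rle_or_lt (A - (1 - A) * exp s) 0) as [|hc]; auto.
  exfalso. assert (0 < s * (A * (1 - A) * exp s * (A - (1 - A) * exp s) / us ^ 3)); [|lra].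
  apply Rmult_lt_0_compat; auto. apply Rdiv_lt_0_compat. 
  apply Rmult_lt_0_compat; auto. nra. apply pow_lt; auto. }
assert (A - (1 - A) * exp t <= 0) by nra.
assert (0 <= t * (A * (1 - A) * exp t) / ut ^ 3).
{ apply Rdiv_le_0_compat. apply Rmult_le_pos; [lra|]. apply Rmult_le_pos; lra. apply pow_lt; auto. }
replace (t * (A * (1 - A) * exp t * (A - (1 - A) * exp t) / ut ^ 3)) with
  ((t * (A * (1 - A) * exp t) / ut ^ 3) * (A - (1 - A) * exp t)) by (field; lra).
nra.
Qed.

Lemma G0 : G 0 = 0.
Proof. unfold G. rewrite exp_0. replace (A + (1-A)*1) with 1 by ring. rewrite ln_1. ring. Qed.
Lemma g10 : g1 0 = 0.
Proof. unfold g1. rewrite exp_0. field. lra. Qed.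

Lemma PK : P K.
Proof. apply (Pprop K (fun x => x * g3 x)). unfold K. rewrite g10. ring. apply dK. apply P3. Qed.
Lemma PH : P H.
Proof. apply (Pprop H K). unfold H. rewrite G0. ring. apply dH. apply PK. Qed.

Lemma QC t x b : 0 < t < x -> x < b -> F x < F t -> F x < F b -> False.
Proof.
intros [ht htx] hxb h1 h2.
assert (hd : forall c, 0 < c -> is_derive F c (H c / c^3)) by (intros; apply dF; lra).
destruct (MVT_cor2 F (fun c => H c / c^3) t x htx) as [c [hc1 hc2]].
{ intros y hy. apply is_derive_Reals, hd. lra. }
destruct (MVT_cor2 F (fun c => H c / c^3) x b hxb) as [d [hd1 hd2]].
{ intros y hy. apply is_derive_Reals, hd. lra. }
assert (hc3 : 0 < c^3) by (apply pow_lt; lra).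
assert (hd3 : 0 < d^3) by (apply pow_lt; lra).
assert (H c / c^3 < 0) by nra.
assert (0 < H d / d^3) by nra.
assert (H c <= 0).
{ destruct (Rle_or_lt (H c) 0); auto. exfalso.
  assert (0 < H c / c^3) by (apply Rdiv_lt_0_compat; auto). lra. }
assert (H d <= 0) by (apply (PH c d); [lra|auto]).
assert (H d / d^3 <= 0).
{ unfold Rdiv. apply Rmult_le_0_r; auto. left; apply Rinv_0_lt_compat; auto. }
lra.
Qed.

Lemma Gpos x : 0 < x -> 0 <= G x.
Proof.
intros hx. destruct (mvt G g1 0 x hx dG) as [c [hc1 hc2]].
rewrite G0 in hc1.
assert (0 <= g1 c).
{ unfold g1. pose proof (u_pos c). unfold u in *.
  assert (1 < exp c) by (rewrite <- exp_0; apply exp_increasing; lra).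
  replace ((1 - A) * exp c / (A + (1 - A) * exp c) - (1 - A)) with
   ((1-A) * A * (exp c - 1) / (A + (1 - A) * exp c)) by (field; lra).
  apply Rdiv_le_0_compat; auto. assert (0 < (1-A)*A) by nra. nra. }
nra.
Qed.

Lemma gG x : gF A x = G x.
Proof.
unfold gF, G. pose proof (u_pos x). unfold u in *.
replace (1 + A * (exp (- x) - 1)) with ((A + (1 - A) * exp x) * exp (-x)).
2:{ rewrite exp_Ropp. field. pose proof (exp_pos x). lra. }
rewrite ln_mult; auto. rewrite ln_exp. ring. apply exp_pos.
Qed.

Lemma fG x : fF A x = F x.
Proof. unfold fF, F. rewrite gG. auto. Qed.

End S.

Theorem lemmaF2 (A B : R) (hA0 : 0 < A) (hA1 : A < 1)
  (hB0 : 0 <= B) (hB : ln (A / (1 - A)) < B) :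
  forall x : R, 0 < x <= B ->
    gF A x >= Rmin (real (Lim (fF A) 0)) (fF A B) * x ^ 2.
Proof.
intros x [hx hxB].
assert (hx2 : 0 < x^2) by (apply pow_lt; lra).
assert (hGF : gF A x = fF A x * x^2).
{ unfold fF. field. lra. }
rewrite hGF.
apply Rle_ge. apply Rmult_le_compat_r; [lra|].
destruct (Rle_or_lt (fF A B) (fF A x)) as [h|h].
{ eapply Rle_trans; [apply Rmin_r|exact h]. }
eapply Rle_trans; [apply Rmin_l|].
assert (hxB' : x < B) by (destruct (Req_dec x B); [subst; lra|lra]).
assert (hle : forall t, 0 < t < x -> fF A t <= fF A x).
{ intros t ht. destruct (Rle_or_lt (fF A t) (fF A x)) as [|hc]; auto.
  exfalso. rewrite !(fG A hA0 hA1) in *. apply (QC A hA0 hA1 t x B); auto. }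
assert (hnn : forall t, 0 < t -> 0 <= fF A t).
{ intros t ht. rewrite (fG A hA0 hA1). unfold F. apply Rdiv_le_0_compat.
  apply (Gpos A hA0 hA1); auto. apply pow_lt; auto. }
unfold Lim.
set (u := fun n : nat => fF A (Rbar_loc_seq 0 n)).
assert (hu : forall n, 0 < Rbar_loc_seq 0 n).
{ intro n. simpl. rewrite Rplus_0_l. apply Rinv_0_lt_compat. pose proof (pos_INR n). lra. }
assert (h1 : Rbar_le (Lim_seq u) (Lim_seq (fun _ => fF A x))).
{ apply Lim_seq_le_loc. destruct (archimed_cor1 x hx) as [N [hN1 hN2]].
  exists N. intros n hn. unfold u. apply hle. split; auto.
  simpl. rewrite Rplus_0_l. eapply Rlt_trans; [|exact hN1].
  apply Rinv_lt_contravar. apply Rmult_lt_0_compat. apply lt_0_INR; lia.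
  pose proof (pos_INR n); lra. apply le_INR in hn. lra. }
assert (h2 : Rbar_le (Lim_seq (fun _ => 0)) (Lim_seq u)).
{ apply Lim_seq_le_loc. exists 0%nat. intros n _. unfold u. apply hnn, hu. }
rewrite Lim_seq_const in h1, h2.
destruct (Lim_seq u) as [l| |]; simpl in *; try contradiction. auto.
Qed.
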